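(* For every $\delta>0$ and $n\in\mathbb{N}$ there exists $N\in\mathbb{N}$ such that the following holds for every $N$-partitioned hypergraph $H$ and every choice of subsets $C_{ijk}\subseteq V_{ik}$, for $i<j<k$, $i,j,k\in[N]$, with $|C_{ijk}|\ge\delta|V_{ik}|$: there exist an induced $n$-partitioned subhypergraph $H'$ of $H$ with index set $I\subseteq[N]$ and vertices $\gamma_{ik}\in V_{ik}$, $i<k$, $i,k\in I$, such that $\gamma_{ik}\in C_{ijk}$ for all $j\in I$ with $i<j<k$.
   Context: An $n$-partitioned hypergraph $H$ is a finite $3$-uniform hypergraph whose vertex set is partitioned into nonempty sets $V_{ij}$, $1\le i<j\le n$, such that every edge has, for some $1\le i<j<k\le n$, exactly one vertex in each of $V_{ij}$, $V_{ik}$, $V_{jk}$. For $I\subseteq[n]$, the induced subhypergraph with index set $I$ is the $|I|$-partitioned hypergraph with parts $V_{ij}$, $i<j$, $i,j\in I$ (indexed by elements of $I$) and all edges of $H$ contained in the union of these parts. *)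

(* Defs.v *)
From HB Require Import structures.
From mathcomp Require Import all_boot all_order all_algebra.
From mathcomp Require Import reals.
Set Implicit Arguments. Unset Strict Implicit. Unset Printing Implicit Defensive.
Import Order.TTheory GRing.Theory Num.Theory.

(* An N-partitioned 3-uniform hypergraph on a finite vertex type V is given by
   a part map [part : V -> 'I_N * 'I_N] (v lies in V_{ij} iff part v = (i,j))
   and an edge set [E : {set {set V}}]. *)

Definition Vpart (V : finType) (N : nat) (part : V -> 'I_N * 'I_N)
  (i j : 'I_N) : {set V} := [set v | part v == (i, j)].

Definition is_partitioned_hypergraph (V : finType) (N : nat)
  (part : V -> 'I_N * 'I_N) (E : {set {set V}}) : Prop :=
  (forall v : V, ((part v).1 < (part v).2)%N) /\
  (forall i j : 'I_N, (i < j)%N -> exists v : V, part v = (i, j)) /\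
  (forall e : {set V}, e \in E ->
     exists (i j k : 'I_N), [/\ (i < j)%N, (j < k)%N &
       exists a b c : V, [/\ part a = (i, j), part b = (i, k),
                            part c = (j, k) & e = [set a; b; c]]]).

Definition induced_vertices (V : finType) (N : nat)
  (part : V -> 'I_N * 'I_N) (I : {set 'I_N}) : {set V} :=
  [set v | ((part v).1 \in I) && ((part v).2 \in I)].

(* Main.v *)
Require Import Defs.
From HB Require Import structures.
From mathcomp Require Import all_boot all_order all_algebra.
From mathcomp Require Import reals.
From mathcomp Require Import zify.
Import Order.TTheory GRing.Theory Num.Theory.
Set Implicit Arguments. Unset Strict Implicit. Unset Printing Implicit Defensive.


Lemma subseq_cons_dec (T : eqType) (x : T) (S Z : seq T) :
  subseq S (x :: Z) -> S = [::] \/ (exists U, S = x :: U /\ subseq U Z) \/ subseq S Z.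
Proof.
case: S => [|y S] /=; first by left.
case: eqP => [->|_] H; right; [left; by exists S | by right].
Qed.

Lemma subseq_cons2 (T : eqType) (x : T) (s t : seq T) :
  subseq s t -> subseq (x :: s) (x :: t).
Proof. by move=> H /=; rewrite eqxx. Qed.

Lemma sub_tr (T : eqType) (x y z : seq T) : subseq x y -> subseq y z -> subseq x z.
Proof. by move=> h1 h2; apply: (subseq_trans h1 h2). Qed.

Definition homog (T : eqType) s (f : seq T -> bool) (c : bool) (Y : seq T) :=
  forall S, subseq S Y -> size S = s -> f S = c.

Lemma homog_sub (T : eqType) s f c (Y Z : seq T) :
  subseq Z Y -> homog s f c Y -> homog s f c Z.
Proof. by move=> sZY hY S sSZ; apply: hY; apply: sub_tr sSZ sZY. Qed.

Lemma ramsey (s a b : nat) : exists R, forall (T : eqType) (X : seq T) (f : seq T -> bool),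
  R <= size X -> exists Y, subseq Y X /\
   ((size Y = a /\ homog s f true Y) \/ (size Y = b /\ homog s f false Y)).
Proof.
elim: s a b => [|s IHs] a b.
  exists (maxn a b) => T X f HX.
  case Hf: (f [::]).
  - exists (take a X); split; first exact: take_subseq.
    left; split; first by rewrite size_take; apply/minn_idPl; apply: leq_trans HX; exact: leq_maxl.
    by move=> S _ /size0nil ->.
  - exists (take b X); split; first exact: take_subseq.
    right; split; first by rewrite size_take; apply/minn_idPl; apply: leq_trans HX; exact: leq_maxr.
    by move=> S _ /size0nil ->.
suff H : forall m a b, a + b <= m -> exists R, forall (T : eqType) (X : seq T) (f : seq T -> bool),
  R <= size X -> exists Y, subseq Y X /\
   ((size Y = a /\ homog s.+1 f true Y) \/ (size Y = b /\ homog s.+1 f false Y)).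
  exact: (H (a + b)).
elim=> [|m IHm] {}a {}b Hab.
  have -> : a = 0 by case: a Hab.
  exists 0 => T X f _; exists [::]; split; first exact: sub0seq.
  by left; split=> // S; rewrite subseq0 => /eqP ->.
case: a Hab => [|a] Hab.
  exists 0 => T X f _; exists [::]; split; first exact: sub0seq.
  by left; split=> // S; rewrite subseq0 => /eqP ->.
case: b Hab => [|b] Hab.
  exists 0 => T X f _; exists [::]; split; first exact: sub0seq.
  by right; split=> // S; rewrite subseq0 => /eqP ->.
have [R1 HR1] := IHm a b.+1 ltac:(by rewrite addSn in Hab).
have [R2 HR2] := IHm a.+1 b ltac:(by rewrite addnS in Hab).
have [Rk HRk] := IHs R1 R2.
exists Rk.+1 => T X f HX.
case: X HX => [//|x X'] /= HX.
have [Y' [sY' [[szY' hY']|[szY' hY']]]] := HRk T X' (fun U => f (x :: U)) HX.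
- have [Z [sZ [[szZ hZ]|[szZ hZ]]]] := HR1 T Y' f (eq_leq (esym szY')).
  + exists (x :: Z); split; first by apply: subseq_cons2; exact: sub_tr sZ sY'.
    left; split; first by rewrite /= szZ.
    move=> S sS szS; case: (subseq_cons_dec sS) => [E|[[U [ES sU]]|sSZ]].
    * by rewrite E in szS.
    * rewrite ES; apply: hY'; [exact: sub_tr sU sZ | by move: szS; rewrite ES => -[]].
    * exact: hZ.
  + exists Z; split; last by right.
    exact: (sub_tr sZ (sub_tr sY' (subseq_cons X' x))).
- have [Z [sZ [[szZ hZ]|[szZ hZ]]]] := HR2 T Y' f (eq_leq (esym szY')).
  + exists Z; split; last by left.
    exact: (sub_tr sZ (sub_tr sY' (subseq_cons X' x))).
  + exists (x :: Z); split; first by apply: subseq_cons2; exact: sub_tr sZ sY'.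
    right; split; first by rewrite /= szZ.
    move=> S sS szS; case: (subseq_cons_dec sS) => [E|[[U [ES sU]]|sSZ]].
    * by rewrite E in szS.
    * rewrite ES; apply: hY'; [exact: sub_tr sU sZ | by move: szS; rewrite ES => -[]].
    * exact: hZ.
Qed.

Lemma ramsey_multi (s a b r : nat) : exists R, forall (T : eqType) (X : seq T)
  (F : nat -> seq T -> bool),
  (forall i Y, i < r -> subseq Y X -> size Y = b -> exists S, [/\ subseq S Y, size S = s & F i S]) ->
  R <= size X -> exists Y, [/\ subseq Y X, size Y = a &
     forall i S, i < r -> subseq S Y -> size S = s -> F i S].
Proof.
elim: r => [|r [Rr HRr]].
  exists a => T X F _ HX; exists (take a X); split => //; first exact: take_subseq.
  by rewrite size_take; apply/minn_idPl.
have [R HR] := ramsey s Rr b.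
exists R => T X F Hb HX.
have [Y [sY [[szY hY]|[szY hY]]]] := HR T X (F r) HX.
- have HbY : forall i W, i < r -> subseq W Y -> size W = b ->
      exists S, [/\ subseq S W, size S = s & F i S].
    move=> i W ir sW szW; apply: Hb => //; first exact: ltnW.
    exact: sub_tr sW sY.
  have [Z [sZ szZ hZ]] := HRr T Y F HbY (eq_leq (esym szY)).
  exists Z; split => //; first exact: sub_tr sZ sY.
  move=> i S; rewrite ltnS leq_eqVlt => /orP [/eqP ->|ir] sS szS; last exact: hZ.
  apply: hY => //; exact: sub_tr sS sZ.
- have [S [sS szS FS]] := Hb r Y (ltnSn r) sY szY.
  by rewrite hY in FS.
Qed.

Lemma pos_lemma (T : Type) (x0 : T) (low J high : seq T) (i k : T) :
  let S := low ++ i :: J ++ k :: high in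
  [/\ nth x0 S (size low) = i, nth x0 S (size low + (size J).+1) = k &
      drop (size low).+1 (take (size low + (size J).+1) S) = J].
Proof.
elim: low => [|x low IH] /=.
  split => //; first by rewrite nth_cat ltnn subnn.
  by rewrite drop0 take_size_cat.
by case: IH => h1 h2 h3; split.
Qed.

Lemma construct (T : eqType) (lt : rel T) (x0 : T) (good : T -> T -> seq T -> bool)
  (n L p q : nat) (Y : seq T) :
  transitive lt -> sorted lt Y -> p < q -> q < n -> size Y = n + L ->
  (forall i k mid, lt i k -> (forall j, j \in mid -> lt i j && lt j k) -> size mid = L ->
     exists J, [/\ subseq J mid, size J = q - p.+1 & good i k J]) ->
  exists S, [/\ subseq S Y, size S = n &
     good (nth x0 S p) (nth x0 S q) (drop p.+1 (take q S))].
Proof.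
move=> tr srt pq qn szY D.
set low := take p Y; set i := nth x0 Y p; set mid := take L (drop p.+1 Y).
set k := nth x0 Y (p.+1 + L); set high := drop (p.+2 + L) Y.
have eY : Y = low ++ i :: mid ++ k :: high.
  have e1 : drop p Y = i :: drop p.+1 Y by rewrite (drop_nth x0) // szY; lia.
  have e2 : drop (p.+1 + L) Y = k :: high by rewrite (drop_nth x0) // szY; lia.
  by rewrite -{1}(cat_take_drop p Y) e1 -{1}(cat_take_drop L (drop p.+1 Y)) drop_drop (addnC L) e2.
have szlow : size low = p by rewrite size_takel // szY; lia.
have szhigh : size high = n - p.+2 by rewrite size_drop szY; lia.
have sortsub : forall s, subseq s Y -> sorted lt s by move=> s ss; exact: (subseq_sorted tr ss srt).
have lik : lt i k.
  have : subseq [:: i; k] Y.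
    rewrite eY -[[:: i; k]]cat0s; apply: cat_subseq; first exact: sub0seq.
    rewrite /= eqxx; rewrite -[[:: k]]cat0s; apply: cat_subseq; first exact: sub0seq.
    by rewrite /= eqxx sub0seq.
  by move/sortsub => /= /andP [].
have mbetween : forall j, j \in mid -> lt i j && lt j k.
  move=> j jm.
  have : subseq [:: i; j; k] Y.
    rewrite eY -[[:: i; j; k]]cat0s; apply: cat_subseq; first exact: sub0seq.
    rewrite /= eqxx; rewrite -[[:: j; k]]/([:: j] ++ [:: k]); apply: cat_subseq; first by rewrite sub1seq.
    by rewrite /= eqxx sub0seq.
  by move/sortsub => /= /and3P [-> ->].
have szmid : size mid = L by rewrite size_takel // size_drop szY; lia.
have [J [sJ szJ gJ]] := D i k mid lik mbetween szmid.
set high' := take (n.-1 - q) high.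
exists (low ++ i :: J ++ k :: high'); split.
- rewrite [X in subseq _ X]eY; apply: cat_subseq => //; rewrite /= eqxx.
  apply: cat_subseq => //; rewrite /= eqxx; exact: take_subseq.
- have szh' : size high' = n.-1 - q by rewrite size_takel // szhigh; lia.
  rewrite size_cat /= size_cat /= szh' szlow szJ; lia.
- have [h1 h2 h3] := pos_lemma x0 low J high' i k.
  have ep : p = size low by [].
  have eq : q = size low + (size J).+1 by rewrite szlow szJ; lia.
  by rewrite eq ep h1 h2 h3.
Qed.

Local Open Scope ring_scope.

Lemma sum_count_card (V : finType) (A : {set V}) (cs : seq {set V}) :
  (forall c, c \in cs -> c \subset A) ->
  \sum_(v in A) count (fun c : {set V} => v \in c) cs = \sum_(c <- cs) #|c|.
Proof.
elim: cs => [|c cs IH] H.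
  by rewrite big_nil big1.
rewrite big_cons /= big_split /= IH; last by move=> c' hc'; apply: H; rewrite in_cons hc' orbT.
congr (_ + _).
rewrite -big_mkcondr /= sum1_card.
apply: eq_card => v; rewrite unfold_in /=.
case vc: (v \in c); last by rewrite andbF.
by rewrite andbT; apply: (subsetP (H c (mem_head c cs))).
Qed.

Lemma density (R : realType) (delta : R) (V : finType) (A : {set V}) (cs : seq {set V}) :
  (exists v, v \in A) ->
  (forall c, c \in cs -> c \subset A /\ delta * (#|A|)%:R <= (#|c|)%:R) ->
  exists2 v, v \in A & delta * (size cs)%:R <= (count (fun c : {set V} => v \in c) cs)%:R.
Proof.
move=> [v0 v0A] H.
case: (boolP [exists v in A, delta * (size cs)%:R <= (count (fun c : {set V} => v \in c) cs)%:R]%R).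
  by move=> /exists_inP [v vA hv]; exists v.
rewrite negb_exists_in => /forall_inP Hn.
have lt : (\sum_(v in A) ((count (fun c : {set V} => v \in c) cs)%:R : R) < \sum_(v in A) (delta * (size cs)%:R))%R.
  apply: ltr_sum; first by apply/hasP; exists v0 => //; rewrite mem_index_enum.
  by move=> v vA; rewrite ltNge; apply: Hn.
have e := sum_count_card (fun c hc => proj1 (H c hc)).
move: lt; rewrite -natr_sum e natr_sum sumr_const.
have le : (\sum_(c <- cs) (delta * #|A|%:R) <= \sum_(c <- cs) (#|c|%:R : R))%R.
  rewrite big_seq [X in _ <= X]big_seq; apply: ler_sum => c hc; exact: (proj2 (H c hc)).
have ec : \sum_(c <- cs) (delta * #|A|%:R) = delta * #|A|%:R * (size cs)%:R.
  elim: (cs) => [|c cs' IHc]; first by rewrite big_nil mulr0.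
  by rewrite big_cons IHc /= -[(size cs').+1]addn1 natrD mulrDr mulr1 addrC.
rewrite ec in le.
move=> lt; rewrite -(mulr_natr (delta * (size cs)%:R) #|A|) -mulrA (mulrC (size cs)%:R) mulrA in lt.
by have := le_lt_trans le lt; rewrite ltxx.
Qed.



Lemma density2 (R : realType) (delta : R) (V : finType) (A : {set V}) (cs : seq {set V}) :
  (exists v, v \in A) ->
  (forall c, c \in cs -> c \subset A /\ delta * (#|A|)%:R <= (#|c|)%:R) ->
  exists2 v, v \in A & delta * (size cs)%:R <= (count (fun c : {set V} => v \in c) cs)%:R.
Proof. exact: density. Qed.

Theorem lemma4p3 (R : realType) (delta : R) (n : nat) :
  0 < delta ->
  exists N : nat,
    forall (V : finType) (part : V -> 'I_N * 'I_N) (E : {set {set V}}),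
      is_partitioned_hypergraph part E ->
      forall C : 'I_N -> 'I_N -> 'I_N -> {set V},
        (forall i j k : 'I_N, (i < j)%N -> (j < k)%N ->
           C i j k \subset Vpart part i k /\
           delta * (#|Vpart part i k|)%:R <= (#|C i j k|)%:R) ->
        exists (I : {set 'I_N}) (gamma : 'I_N -> 'I_N -> V),
          #|I| = n /\
          (forall i k : 'I_N, i \in I -> k \in I -> (i < k)%N ->
             gamma i k \in Vpart part i k /\
             (forall j : 'I_N, j \in I -> (i < j)%N -> (j < k)%N ->
                gamma i k \in C i j k)).
Proof.
move=> dpos.
have [L HL] : exists L : nat, n%:R <= delta * L%:R.
  exists (Num.Def.archi_bound (n%:R / delta)).
  have h := archi_boundP (divr_ge0 (ler0n R n) (ltW dpos)).
  have e : n%:R = delta * (n%:R / delta) :> R by rewrite mulrC divfK // gt_eqF.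
  rewrite {1}e; apply: ler_wpM2l; [exact: ltW dpos | exact: ltW h].
have [M HM] := ramsey_multi n n (n + L) (n * n).
exists M.+2 => V part E [Hpv [Hne _]] C HC.
have [v0 _] := Hne (@Ordinal M.+2 0 isT) (@Ordinal M.+2 1 isT) isT.
pose x0 : 'I_M.+2 := ord0.
pose good (i k : 'I_M.+2) (J : seq 'I_M.+2) :=
  [exists v, (v \in Vpart part i k) && all (fun j => v \in C i j k) J].
pose F (idx : nat) (S : seq 'I_M.+2) := ((idx %/ n < idx %% n)%N ==>
  good (nth x0 S (idx %/ n)) (nth x0 S (idx %% n)) (drop (idx %/ n).+1 (take (idx %% n) S))).
pose lt := fun x y : 'I_M.+2 => (x < y)%N.
have tr : transitive lt by move=> y x z; exact: ltn_trans.
have srtX : sorted lt (enum 'I_M.+2).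
  by rewrite -[sorted _ _]/(sorted (relpre val ltn) _) -sorted_map val_enum_ord iota_ltn_sorted.
have D : forall m, (m <= n)%N -> forall i k mid, lt i k -> (forall j, j \in mid -> lt i j && lt j k) ->
    size mid = L -> exists J, [/\ subseq J mid, size J = m & good i k J].
  move=> m mn i k mid ik hmid szmid.
  have ne : exists v, v \in Vpart part i k.
    have [v hv] := Hne i k ik; exists v; by rewrite /Vpart inE hv.
  have hcs : forall c, c \in map (fun j => C i j k) mid ->
      c \subset Vpart part i k /\ delta * (#|Vpart part i k|)%:R <= (#|c|)%:R.
    move=> c /mapP [j jm ->]; have /andP [h1 h2] := hmid j jm; exact: HC.
  have [v vA hv] := density2 ne hcs.
  rewrite size_map count_map szmid in hv.
  have mc : (m <= count (fun j => v \in C i j k) mid)%N.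
    rewrite -(ler_nat R); apply: le_trans hv; apply: le_trans HL; by rewrite ler_nat.
  exists (take m (filter (fun j => v \in C i j k) mid)); split.
  - exact: sub_tr (take_subseq _ _) (filter_subseq _ _).
  - by rewrite size_takel // size_filter.
  - apply/existsP; exists v; rewrite vA /=; apply/allP => j /mem_take.
    by rewrite mem_filter => /andP [].
have Hb : forall idx Y, (idx < n * n)%N -> subseq Y (enum 'I_M.+2) -> size Y = (n + L)%N ->
    exists S, [/\ subseq S Y, size S = n & F idx S].
  move=> idx Y idxn sY szY.
  case: (ltnP (idx %/ n) (idx %% n)) => pq; last first.
    exists (take n Y); split; [exact: take_subseq | by rewrite size_takel // szY leq_addr | ].
    by rewrite /F ltnNge pq.
  have n0 : (0 < n)%N by case: n idxn {HL D HM pq szY F} => [|//]; rewrite muln0.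
  have qn : (idx %% n < n)%N by rewrite ltn_mod.
  have [S [sS szS gS]] := @construct _ lt x0 good n L _ _ Y tr (subseq_sorted tr sY srtX) pq qn szY (D (idx %% n - (idx %/ n).+1)%N (leq_trans (leq_subr _ _) (ltnW qn))).
  by exists S; split => //; rewrite /F pq.
have [Y [sY szY hY]] := HM _ (enum 'I_M.+2) F Hb ltac:(rewrite size_enum_ord; lia).
have srtY : sorted lt Y := subseq_sorted tr sY srtX.
have uY : uniq Y := subseq_uniq sY (enum_uniq _).
have idx_lt : forall x y, x \in Y -> y \in Y -> (x < y)%N -> (index x Y < index y Y)%N.
  move=> x y xY yY xy; rewrite ltnNge; apply/negP; rewrite leq_eqVlt => /orP [/eqP e | h].
    by move: xy; rewrite -(nth_index x0 xY) -(nth_index x0 yY) e ltnn.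
  have := sorted_ltn_nth tr x0 srtY; move=> /(_ (index y Y) (index x Y)).
  rewrite !inE !index_mem => /(_ yY xY h); rewrite /lt !nth_index // => yx.
  by move: (ltn_trans xy yx); rewrite ltnn.
exists [set x | x \in Y], (fun i k => odflt v0 [pick v | (v \in Vpart part i k) &&
   all (fun j => v \in C i j k) (drop (index i Y).+1 (take (index k Y) Y))]).
split; first by rewrite cardsE (card_uniqP uY) szY.
move=> i k; rewrite !inE => iY kY ik.
have pq := idx_lt i k iY kY ik.
have qn : (index k Y < n)%N by rewrite -szY index_mem.
have n0 : (0 < n)%N by lia.
have bnd : (index i Y * n + index k Y < n * n)%N.
  have pn : (index i Y < n)%N by apply: ltn_trans qn.
  apply: (@leq_trans ((index i Y).+1 * n)); first by rewrite mulSn addnC ltn_add2r.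
  by rewrite leq_mul2r pn orbT.
have F' := hY (index i Y * n + index k Y)%N Y bnd (subseq_refl Y) szY.
have e1 : ((index i Y * n + index k Y) %/ n = index i Y)%N.
  by rewrite divnMDl // divn_small // addn0.
have e2 : ((index i Y * n + index k Y) %% n = index k Y)%N by rewrite modnMDl modn_small.
rewrite /F e1 e2 pq /= !nth_index // in F'.
case: pickP => [v /andP [vV vall] | none]; last first.
  by move: F' => /existsP [v hv]; rewrite none in hv.
split; first by move: vV; rewrite /Vpart inE.
move=> j; rewrite inE => jY ij jk.
apply: (allP vall).
have t1 := idx_lt i j iY jY ij; have t2 := idx_lt j k jY kY jk.
rewrite -(nth_index x0 jY).
have -> : nth x0 Y (index j Y) =
    nth x0 (drop (index i Y).+1 (take (index k Y) Y)) (index j Y - (index i Y).+1).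
  by rewrite nth_drop subnKC // nth_take.
apply: mem_nth; rewrite size_drop size_takel; first by apply: ltn_sub2r => //; apply: leq_ltn_trans t1 t2.
by rewrite -szY in qn; exact: ltnW.
Qed.
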